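(* Let $m$ be a nonnegative integer and suppose there is a resolvable $(56m+8,8,1)$-BIBD. Let $0\le t\le 8m$ and suppose there exists a nested $(3t+1,4,1)$-BIBD. Then there exists a nested $(v,4,1)$-BIBD for $v=168m+3t+25$.
   Context: A $(v,k,\lambda)$-BIBD is a set $X$ of $v$ points with a multiset $\mathcal{A}$ of $k$-subsets such that every pair of distinct points lies in exactly $\lambda$ blocks (partial: at most $\lambda$). It is resolvable if its blocks can be partitioned into parallel classes, each of which partitions $X$. A $(v,4,1)$-BIBD is nested if there is a map $\phi:\mathcal{A}\to X$ such that $\{A\cup\{\phi(A)\}:A\in\mathcal{A}\}$ is the block multiset of a partial $(v,5,2)$-BIBD on $X$ (in particular $\phi(A)\notin A$). *)

(* Defs.v *)
From mathcomp Require Import all_boot.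
Unset Printing Implicit Defensive.

(* Point set X = 'I_v; the block multiset is a list of subsets of X
   (repetitions allowed, order irrelevant). *)

Definition partial_BIBD (v k lam : nat) (B : seq {set 'I_v}) : Prop :=
  (forall A, A \in B -> #|A| = k) /\
  (forall x y : 'I_v, x != y -> count (fun A : {set 'I_v} => (x \in A) && (y \in A)) B <= lam).

Definition BIBD (v k lam : nat) (B : seq {set 'I_v}) : Prop :=
  (forall A, A \in B -> #|A| = k) /\
  (forall x y : 'I_v, x != y -> count (fun A : {set 'I_v} => (x \in A) && (y \in A)) B = lam).

Definition parallel_class (v : nat) (c : seq {set 'I_v}) : Prop :=
  forall x : 'I_v, count (fun A : {set 'I_v} => x \in A) c = 1.

Definition resolvable_BIBD (v k lam : nat) (B : seq {set 'I_v}) : Prop :=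
  BIBD v k lam B /\
  exists P : seq (seq {set 'I_v}),
    perm_eq (flatten P) B /\ (forall c, c \in P -> parallel_class v c).

(* nested (v,4,1)-BIBD: a map phi from the blocks (occurrences, given as the
   list f aligned with B) to points, with phi(A) \notin A, such that
   {A U {phi A}} is the block multiset of a partial (v,5,2)-BIBD. *)
Definition nested_BIBD (v : nat) (B : seq {set 'I_v}) : Prop :=
  BIBD v 4 1 B /\
  exists f : seq 'I_v,
    size f = size B /\
    (forall p, p \in zip B f -> p.2 \notin p.1) /\
    partial_BIBD v 5 2 [seq p.2 |: p.1 | p <- zip B f].

(* Main.v *)
Require Import Defs.
From mathcomp Require Import all_boot zify.
Set Implicit Arguments. Unset Strict Implicit. Unset Printing Implicit Defensive.

Definition I25 : seq (seq nat * nat) :=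
  [:: ([:: 1; 3; 8; 19], 12);
     ([:: 1; 6; 11; 22], 17);
     ([:: 1; 9; 14; 4], 8);
     ([:: 1; 12; 17; 7], 4);
     ([:: 1; 15; 20; 10], 22);
     ([:: 1; 18; 23; 13], 7);
     ([:: 1; 21; 5; 16], 6);
     ([:: 4; 7; 11; 13], 16);
     ([:: 7; 10; 14; 16], 21);
     ([:: 10; 13; 17; 19], 23);
     ([:: 13; 16; 20; 22], 3);
     ([:: 16; 19; 23; 4], 14);
     ([:: 19; 22; 5; 7], 0);
     ([:: 22; 4; 8; 10], 13);
     ([:: 3; 6; 12; 16], 9);
     ([:: 6; 9; 15; 19], 13);
     ([:: 9; 12; 18; 22], 2);
     ([:: 12; 15; 21; 4], 20);
     ([:: 15; 18; 3; 7], 14);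
     ([:: 18; 21; 6; 10], 12);
     ([:: 21; 3; 9; 13], 1);
     ([:: 0; 3; 10; 23], 8);
     ([:: 0; 6; 13; 5], 18);
     ([:: 0; 9; 16; 8], 20);
     ([:: 0; 12; 19; 11], 15);
     ([:: 0; 15; 22; 14], 6);
     ([:: 0; 18; 4; 17], 9);
     ([:: 0; 21; 7; 20], 11);
     ([:: 2; 3; 17; 22], 19);
     ([:: 2; 6; 20; 4], 10);
     ([:: 2; 9; 23; 7], 15);
     ([:: 2; 12; 5; 10], 17);
     ([:: 2; 15; 8; 13], 21);
     ([:: 2; 18; 11; 16], 23);
     ([:: 2; 21; 14; 19], 5);
     ([:: 3; 11; 14; 20], 2);
     ([:: 6; 14; 17; 23], 20);
     ([:: 9; 17; 20; 5], 7);
     ([:: 12; 20; 23; 8], 5);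
     ([:: 15; 23; 5; 11], 1);
     ([:: 18; 5; 8; 14], 22);
     ([:: 21; 8; 11; 17], 18);
     ([:: 24; 0; 1; 2], 16);
     ([:: 24; 3; 4; 5], 15);
     ([:: 24; 6; 7; 8], 2);
     ([:: 24; 9; 10; 11], 19);
     ([:: 24; 12; 13; 14], 11);
     ([:: 24; 15; 16; 17], 8);
     ([:: 24; 18; 19; 20], 1);
     ([:: 24; 21; 22; 23], 4)].
Definition J25 : seq (seq nat * nat) :=
  [:: ([:: 1; 3; 8; 19], 12);
     ([:: 1; 6; 11; 22], 17);
     ([:: 1; 9; 14; 4], 8);
     ([:: 1; 12; 17; 7], 4);
     ([:: 1; 15; 20; 10], 22);
     ([:: 1; 18; 23; 13], 7);
     ([:: 1; 21; 5; 16], 6);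
     ([:: 4; 7; 11; 13], 16);
     ([:: 7; 10; 14; 16], 21);
     ([:: 10; 13; 17; 19], 23);
     ([:: 13; 16; 20; 22], 3);
     ([:: 16; 19; 23; 4], 14);
     ([:: 19; 22; 5; 7], 0);
     ([:: 22; 4; 8; 10], 13);
     ([:: 3; 6; 12; 16], 9);
     ([:: 6; 9; 15; 19], 13);
     ([:: 9; 12; 18; 22], 2);
     ([:: 12; 15; 21; 4], 20);
     ([:: 15; 18; 3; 7], 14);
     ([:: 18; 21; 6; 10], 12);
     ([:: 21; 3; 9; 13], 1);
     ([:: 0; 3; 10; 23], 8);
     ([:: 0; 6; 13; 5], 18);
     ([:: 0; 9; 16; 8], 20);
     ([:: 0; 12; 19; 11], 15);
     ([:: 0; 15; 22; 14], 6);
     ([:: 0; 18; 4; 17], 9);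
     ([:: 0; 21; 7; 20], 11);
     ([:: 2; 3; 17; 22], 19);
     ([:: 2; 6; 20; 4], 10);
     ([:: 2; 9; 23; 7], 15);
     ([:: 2; 12; 5; 10], 17);
     ([:: 2; 15; 8; 13], 21);
     ([:: 2; 18; 11; 16], 23);
     ([:: 2; 21; 14; 19], 5);
     ([:: 3; 11; 14; 20], 2);
     ([:: 6; 14; 17; 23], 20);
     ([:: 9; 17; 20; 5], 7);
     ([:: 12; 20; 23; 8], 5);
     ([:: 15; 23; 5; 11], 1);
     ([:: 18; 5; 8; 14], 22);
     ([:: 21; 8; 11; 17], 18)].
Definition I28 : seq (seq nat * nat) :=
  [:: ([:: 0; 3; 9; 13], 25);
     ([:: 0; 5; 16; 24], 6);
     ([:: 1; 4; 10; 14], 26);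
     ([:: 1; 3; 17; 25], 7);
     ([:: 2; 5; 11; 12], 24);
     ([:: 2; 4; 15; 26], 8);
     ([:: 3; 6; 12; 16], 19);
     ([:: 3; 8; 10; 18], 0);
     ([:: 4; 7; 13; 17], 20);
     ([:: 4; 6; 11; 19], 1);
     ([:: 5; 8; 14; 15], 18);
     ([:: 5; 7; 9; 20], 2);
     ([:: 6; 0; 15; 10], 22);
     ([:: 6; 2; 13; 21], 3);
     ([:: 7; 1; 16; 11], 23);
     ([:: 7; 0; 14; 22], 4);
     ([:: 8; 2; 17; 9], 21);
     ([:: 8; 1; 12; 23], 5);
     ([:: 9; 12; 18; 22], 7);
     ([:: 9; 14; 25; 6], 15);
     ([:: 10; 13; 19; 23], 8);
     ([:: 10; 12; 26; 7], 16);
     ([:: 11; 14; 20; 21], 6);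
     ([:: 11; 13; 24; 8], 17);
     ([:: 12; 15; 21; 25], 1);
     ([:: 12; 17; 19; 0], 9);
     ([:: 13; 16; 22; 26], 2);
     ([:: 13; 15; 20; 1], 10);
     ([:: 14; 17; 23; 24], 0);
     ([:: 14; 16; 18; 2], 11);
     ([:: 15; 9; 24; 19], 4);
     ([:: 15; 11; 22; 3], 12);
     ([:: 16; 10; 25; 20], 5);
     ([:: 16; 9; 23; 4], 13);
     ([:: 17; 11; 26; 18], 3);
     ([:: 17; 10; 21; 5], 14);
     ([:: 18; 21; 0; 4], 16);
     ([:: 18; 23; 7; 15], 24);
     ([:: 19; 22; 1; 5], 17);
     ([:: 19; 21; 8; 16], 25);
     ([:: 20; 23; 2; 3], 15);
     ([:: 20; 22; 6; 17], 26);
     ([:: 21; 24; 3; 7], 10);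
     ([:: 21; 26; 1; 9], 18);
     ([:: 22; 25; 4; 8], 11);
     ([:: 22; 24; 2; 10], 19);
     ([:: 23; 26; 5; 6], 9);
     ([:: 23; 25; 0; 11], 20);
     ([:: 24; 18; 6; 1], 13);
     ([:: 24; 20; 4; 12], 21);
     ([:: 25; 19; 7; 2], 14);
     ([:: 25; 18; 5; 13], 22);
     ([:: 26; 20; 8; 0], 12);
     ([:: 26; 19; 3; 14], 23)].

Definition cnt (L : seq (seq nat)) (x y : nat) :=
  count (fun A => (x \in A) && (y \in A)) L.
Definition blocksI (I : seq (seq nat * nat)) := [seq p.1 | p <- I].
Definition augI (I : seq (seq nat * nat)) := [seq p.2 :: p.1 | p <- I].

Definition tab_ok (n : nat) (I : seq (seq nat * nat)) (pl : nat -> nat -> nat) :=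
  all (fun x => all (fun y => (x == y) ||
     ((cnt (blocksI I) x y == pl x y) && (cnt (augI I) x y <= 2 * pl x y)))
     (iota 0 n)) (iota 0 n)
  && all (fun p => uniq (p.2 :: p.1) && (size p.1 == 4) && all (fun z => z < n) (p.2 :: p.1)) I.

Definition pl25 (x y : nat) := 1.
Definition plJ25 (x y : nat) := ((x < 24) && (y < 24) && (x %/ 3 != y %/ 3) : nat).
Definition pl28 (x y : nat) := ((x %/ 3 != y %/ 3) : nat).

Lemma I25_ok : tab_ok 25 I25 pl25. Proof. by vm_compute. Qed.
Lemma J25_ok : tab_ok 25 J25 plJ25. Proof. by vm_compute. Qed.
Lemma I28_ok : tab_ok 27 I28 pl28. Proof. by vm_compute. Qed.


Lemma tab_ok_use n I pl : tab_ok n I pl ->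
  (forall x y, x < n -> y < n -> x != y ->
     cnt (blocksI I) x y = pl x y /\ cnt (augI I) x y <= 2 * pl x y) /\
  (forall p, p \in I -> [/\ uniq (p.2 :: p.1), size p.1 = 4 & all (fun z => z < n) (p.2 :: p.1)]).
Proof.
case/andP=> /allP H1 /allP H2; split.
  move=> x y xn yn nxy.
  have := H1 x; rewrite mem_iota add0n xn => /(_ isT) /allP /(_ y).
  rewrite mem_iota add0n yn (negbTE nxy) /= => /(_ isT) /andP [/eqP -> ->]; done.
by move=> p /H2 /andP [/andP [-> /eqP ->] ->].
Qed.

Definition mapI (mu : nat -> nat) (I : seq (seq nat * nat)) :=
  [seq (map mu p.1, mu p.2) | p <- I].

Lemma blocks_mapI mu I : blocksI (mapI mu I) = map (map mu) (blocksI I).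
Proof. by rewrite /blocksI /mapI -!map_comp. Qed.
Lemma aug_mapI mu I : augI (mapI mu I) = map (map mu) (augI I).
Proof. by rewrite /augI /mapI -!map_comp. Qed.

Lemma cntC L x y : cnt L x y = cnt L y x.
Proof. by apply: eq_count => A; rewrite andbC. Qed.

Lemma mem_map_lt (mu : nat -> nat) n (A : seq nat) l :
  {in gtn n &, injective mu} -> all (gtn n) A -> l < n ->
  (mu l \in map mu A) = (l \in A).
Proof.
move=> inj /allP HA ln; apply/mapP/idP => [[z zA e]|lA]; last by exists l.
by rewrite (inj l z ln (HA z zA) e).
Qed.

Lemma cnt_map_in mu n Ls l l' :
  {in gtn n &, injective mu} -> all (all (gtn n)) Ls -> l < n -> l' < n ->
  cnt (map (map mu) Ls) (mu l) (mu l') = cnt Ls l l'.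
Proof.
move=> inj /allP HL ln l'n; rewrite /cnt count_map; apply: eq_in_count => A /HL HA /=.
by rewrite !(mem_map_lt inj HA).
Qed.

Lemma cnt_map_out mu n Ls x y :
  all (all (gtn n)) Ls -> x \notin [seq mu z | z <- iota 0 n] ->
  cnt (map (map mu) Ls) x y = 0.
Proof.
move=> /allP HL xn; rewrite /cnt count_map; apply/eqP; rewrite -leqn0 leqNgt -has_count.
apply/hasP => [[A /HL /allP HA /= /andP [/mapP [z zA e] _]]].
by move: xn; rewrite e map_f // mem_iota add0n; apply: HA.
Qed.

Lemma tab_all n I pl : tab_ok n I pl -> all (all (gtn n)) (augI I) /\ all (all (gtn n)) (blocksI I).
Proof.
case/tab_ok_use => _ H; split; apply/allP => A /mapP [p pI ->];
  have [_ _ /allP Hp] := H p pI; apply/allP => z zA; apply: Hp; rewrite ?inE ?zA ?orbT //.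
Qed.

Lemma piece_aug n I pl mu : tab_ok n I pl -> {in gtn n &, injective mu} ->
  forall x y, x != y -> cnt (augI (mapI mu I)) x y <= 2 * cnt (blocksI (mapI mu I)) x y.
Proof.
move=> T inj x y nxy; have [Ha Hb] := tab_all T; have [Hc _] := tab_ok_use T.
rewrite aug_mapI blocks_mapI.
have [/mapP [l ln ex]|xo] := boolP (x \in [seq mu z | z <- iota 0 n]); last by rewrite (@cnt_map_out mu n _ x y Ha xo).
have [/mapP [l' l'n ey]|yo] := boolP (y \in [seq mu z | z <- iota 0 n]); last by rewrite cntC (@cnt_map_out mu n _ y _ Ha yo).
subst x y; move: ln l'n; rewrite !mem_iota !add0n => /andP [_ ln] /andP [_ l'n].
have nl : l != l' by apply: contraNneq nxy => e; rewrite e.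
rewrite !(@cnt_map_in mu n _ _ _ inj) //; have [-> ->] := Hc _ _ ln l'n nl; done.
Qed.

Lemma piece_plain n I pl mu l l' : tab_ok n I pl -> {in gtn n &, injective mu} ->
  l < n -> l' < n -> l != l' -> cnt (blocksI (mapI mu I)) (mu l) (mu l') = pl l l'.
Proof.
move=> T inj ln l'n nl; have [_ Hb] := tab_all T; have [Hc _] := tab_ok_use T.
by rewrite blocks_mapI (@cnt_map_in mu n _ _ _ inj) //; have [-> _] := Hc _ _ ln l'n nl.
Qed.

Lemma piece_out n I pl mu x y : tab_ok n I pl ->
  x \notin [seq mu z | z <- iota 0 n] -> cnt (blocksI (mapI mu I)) x y = 0.
Proof. by move=> T xo; have [_ Hb] := tab_all T; rewrite blocks_mapI (@cnt_map_out mu n _ x y Hb xo). Qed.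


Lemma count_sum (T : eqType) (a : pred T) s : count a s = \sum_(A <- s) (a A : nat).
Proof. by elim: s => [|y s IH]; rewrite ?big_nil ?big_cons //= IH. Qed.

Lemma inner_sum v (A : {set 'I_v}) (x : 'I_v) :
  \sum_(y | y != x) (((x \in A) && (y \in A)) : nat) = (x \in A) * #|A :\ x|.
Proof.
case: (boolP (x \in A)) => xA /=; last by rewrite big1 // => y _; rewrite (negbTE xA).
rewrite mul1n; transitivity (\sum_(y in A :\ x) 1); last by rewrite sum1_card.
rewrite big_mkcond [RHS]big_mkcond /=; apply: eq_bigr => y _.
by rewrite !inE andbC; case: (y != x); case: (y \in A).
Qed.

Lemma degree v k (B : seq {set 'I_v}) (x : 'I_v) :
  BIBD v k 1 B -> count (fun A : {set 'I_v} => x \in A) B * k.-1 = v.-1.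
Proof.
case=> H1 H2.
have E : \sum_(y | y != x) count (fun A : {set 'I_v} => (x \in A) && (y \in A)) B = v.-1.
  rewrite (eq_bigr (fun _ => 1)); last by move=> y yx; apply: H2; rewrite eq_sym.
  by rewrite sum1_card cardC1 card_ord.
rewrite -E; under eq_bigr do rewrite count_sum.
rewrite exchange_big /= count_sum big_distrl /=.
apply: eq_big_seq => A AB /=; rewrite inner_sum.
case: (boolP (x \in A)) => xA //=; rewrite mul1n.
have := cardsD1 x A; rewrite xA (H1 _ AB) add1n => ->; by rewrite mul1n.
Qed.


Definition fin t b i := 3 * t + 1 + 3 * b + i.
Definition sK N (K : {set 'I_N}) : seq nat := map val (enum K).
Definition mu25 t N (K : {set 'I_N}) l :=
  if l < 24 then fin t (nth 0 (sK K) (l %/ 3)) (l %% 3) else 0.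
Definition mu28 t N (K : {set 'I_N}) (g : seq nat) l :=
  if l < 24 then fin t (nth 0 (sK K) (l %/ 3)) (l %% 3) else nth 0 g (l - 24).

Lemma fin_inj t b b' i i' : i < 3 -> i' < 3 -> fin t b i = fin t b' i' -> b = b' /\ i = i'.
Proof. rewrite /fin => *; split; lia. Qed.

Lemma sK_mem N (K : {set 'I_N}) (bo : 'I_N) : (val bo \in sK K) = (bo \in K).
Proof. by rewrite /sK mem_map ?mem_enum //; apply: val_inj. Qed.

Lemma sK_uniq N (K : {set 'I_N}) : uniq (sK K).
Proof. by rewrite /sK map_inj_uniq ?enum_uniq //; apply: val_inj. Qed.

Lemma sK_size N (K : {set 'I_N}) : size (sK K) = #|K|.
Proof. by rewrite /sK size_map cardE. Qed.

Lemma index_eq (s : seq nat) a b : a \in s -> b \in s -> (index a s == index b s) = (a == b).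
Proof.
move=> aS bS; apply/eqP/eqP => [e|-> //].
by rewrite -(nth_index 0 aS) -(nth_index 0 bS) e.
Qed.



Lemma mu_inj_fin t N (K : {set 'I_N}) l l' : #|K| = 8 -> l < 24 -> l' < 24 ->
  fin t (nth 0 (sK K) (l %/ 3)) (l %% 3) = fin t (nth 0 (sK K) (l' %/ 3)) (l' %% 3) -> l = l'.
Proof.
move=> K8 l24 l'24 /fin_inj []; rewrite ?ltn_mod // => e1 e2.
have := sK_uniq K => U.
have H : l %/ 3 = l' %/ 3.
  by apply/eqP; rewrite -(nth_uniq 0 _ _ U) ?sK_size ?K8 ?e1 //; lia.
by rewrite (divn_eq l 3) (divn_eq l' 3) H e2.
Qed.

Lemma mu25_inj t N (K : {set 'I_N}) : #|K| = 8 -> {in gtn 25 &, injective (mu25 t K)}.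
Proof.
move=> K8 l l'; rewrite !inE /mu25 => l25 l'25.
case: ifP => a; case: ifP => b; rewrite /fin.
- by apply: mu_inj_fin.
- move=> *; lia.
- move=> *; lia.
- move=> _; lia.
Qed.

Definition good_g t (g : seq nat) := [/\ size g = 3, uniq g & forall z, z \in g -> 0 < z < 3 * t + 1].

Lemma mu28_inj t N (K : {set 'I_N}) g : #|K| = 8 -> good_g t g -> {in gtn 27 &, injective (mu28 t K g)}.
Proof.
move=> K8 [g3 gu gr] l l'; rewrite !inE /mu28 => l27 l'27.
case: ifP => a; case: ifP => b.
- by apply: mu_inj_fin.
- have := gr (nth 0 g (l' - 24)); rewrite mem_nth ?g3; last lia.
  move=> /(_ isT); rewrite /fin => *; lia.
- have := gr (nth 0 g (l - 24)); rewrite mem_nth ?g3; last lia.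
  move=> /(_ isT); rewrite /fin => *; lia.
- move=> e; have h1 : l - 24 < size g by rewrite g3; lia.
  have h2 : l' - 24 < size g by rewrite g3; lia.
  move: e => /eqP; rewrite (nth_uniq 0 h1 h2 gu) => /eqP; lia.
Qed.

Definition lab N (K : {set 'I_N}) (bo : 'I_N) i := 3 * index (val bo) (sK K) + i.

Lemma lab_spec t N (K : {set 'I_N}) bo i : #|K| = 8 -> bo \in K -> i < 3 ->
  [/\ lab K bo i < 24, lab K bo i %/ 3 = index (val bo) (sK K),
      mu25 t K (lab K bo i) = fin t bo i & forall g, mu28 t K g (lab K bo i) = fin t bo i].
Proof.
move=> K8 bK i3.
have bs : val bo \in sK K by rewrite sK_mem.
have ix : index (val bo) (sK K) < 8 by rewrite -K8 -sK_size index_mem.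
have d : lab K bo i %/ 3 = index (val bo) (sK K).
  by rewrite /lab mulnC divnMDl // divn_small // addn0.
have m : lab K bo i %% 3 = i by rewrite /lab mulnC modnMDl modn_small.
have l24 : lab K bo i < 24.
  rewrite /lab; set q := index _ _; have : q < 8 by rewrite /q -K8 -sK_size index_mem.
  lia.
by split => //[|g]; rewrite /mu25 /mu28 l24 d m nth_index.
Qed.

Lemma nth_sK N (K : {set 'I_N}) l : #|K| = 8 -> l < 24 -> nth 0 (sK K) (l %/ 3) \in sK K.
Proof. by move=> K8 l24; rewrite mem_nth // sK_size K8; lia. Qed.

Lemma fin_sK t N (K : {set 'I_N}) (bo : 'I_N) i l : #|K| = 8 -> i < 3 -> l < 24 ->
  fin t bo i = fin t (nth 0 (sK K) (l %/ 3)) (l %% 3) -> bo \in K.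
Proof.
move=> K8 i3 l24 /fin_inj []; rewrite ?ltn_mod // => e _.
by have := nth_sK K8 l24; rewrite -e sK_mem.
Qed.

Lemma out25_fin t N (K : {set 'I_N}) bo i : #|K| = 8 -> bo \notin K -> i < 3 ->
  fin t bo i \notin [seq mu25 t K z | z <- iota 0 25].
Proof.
move=> K8 bK i3; apply/mapP => [[l]]; rewrite mem_iota add0n /mu25 => /andP [_ l25].
case: ifP => l24 e; last by move: e; rewrite /fin; lia.
by move: bK; rewrite (fin_sK K8 i3 l24 e).
Qed.

Lemma out25_D t N (K : {set 'I_N}) x : 0 < x < 3 * t + 1 ->
  x \notin [seq mu25 t K z | z <- iota 0 25].
Proof.
move=> xr; apply/mapP => [[l]]; rewrite mem_iota add0n /mu25 => /andP [_ l25].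
by case: ifP => l24; rewrite /fin; lia.
Qed.

Lemma out28_fin t N (K : {set 'I_N}) g bo i : #|K| = 8 -> good_g t g -> bo \notin K -> i < 3 ->
  fin t bo i \notin [seq mu28 t K g z | z <- iota 0 27].
Proof.
move=> K8 [g3 gu gr] bK i3; apply/mapP => [[l]]; rewrite mem_iota add0n /mu28 => /andP [_ l27].
case: ifP => l24 e; last first.
  have := gr (nth 0 g (l - 24)); rewrite mem_nth ?g3; last lia.
  by move=> /(_ isT); move: e; rewrite /fin; lia.
by move: bK; rewrite (fin_sK K8 i3 l24 e).
Qed.

Lemma out28_D t N (K : {set 'I_N}) g x : good_g t g -> x < 3 * t + 1 -> x \notin g ->
  x \notin [seq mu28 t K g z | z <- iota 0 27].
Proof.
move=> [g3 gu gr] xr xg; apply/mapP => [[l]]; rewrite mem_iota add0n /mu28 => /andP [_ l27].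
case: ifP => l24 e; first by move: e; rewrite /fin; lia.
by move: xg; rewrite e mem_nth // g3; lia.
Qed.

Lemma out28_0 t N (K : {set 'I_N}) g : good_g t g -> 0 \notin [seq mu28 t K g z | z <- iota 0 27].
Proof.
move=> gg; apply: out28_D => //; first lia.
by case: gg => _ _ gr; apply/negP => /gr.
Qed.

Lemma in28_D t N (K : {set 'I_N}) g x : good_g t g -> x \in g ->
  24 + index x g < 27 /\ mu28 t K g (24 + index x g) = x.
Proof.
move=> [g3 gu gr] xg; have := index_mem x g; rewrite xg g3 => h.
split; first lia.
by rewrite /mu28 ltnNge leq_addr /= addKn nth_index.
Qed.


Definition piece t N (gj : nat -> seq nat) (j : nat) (K : {set 'I_N}) :=
  if j < t then mapI (mu28 t K (gj j)) I28
  else if j == t then mapI (mu25 t K) I25 else mapI (mu25 t K) J25.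

Lemma piece_aug_le t N gj j (K : {set 'I_N}) : #|K| = 8 -> (j < t -> good_g t (gj j)) ->
  forall x y, x != y -> cnt (augI (piece t gj j K)) x y <= 2 * cnt (blocksI (piece t gj j K)) x y.
Proof.
move=> K8 gg; rewrite /piece; case: ifP => jt.
  by apply: (piece_aug I28_ok); apply: mu28_inj => //; apply: gg.
by case: ifP => _; [apply: (piece_aug I25_ok) | apply: (piece_aug J25_ok)]; apply: mu25_inj.
Qed.

Lemma piece_FF t N gj j (K : {set 'I_N}) (bo co : 'I_N) i i' :
  #|K| = 8 -> (j < t -> good_g t (gj j)) -> i < 3 -> i' < 3 -> fin t bo i != fin t co i' ->
  cnt (blocksI (piece t gj j K)) (fin t bo i) (fin t co i') =
    ((bo \in K) && (co \in K)) * ((bo != co) || (j == t)).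
Proof.
move=> K8 gg i3 i'3 nf.
have [bK|bK] := boolP (bo \in K); last first.
  rewrite /= mul0n /piece; case: ifP => jt.
    by apply: (piece_out _ I28_ok); apply: out28_fin => //; apply: gg.
  by case: ifP => _; [apply: (piece_out _ I25_ok) | apply: (piece_out _ J25_ok)]; apply: out25_fin.
have [cK|cK] := boolP (co \in K); last first.
  rewrite andbF /= mul0n cntC /piece; case: ifP => jt.
    by apply: (piece_out _ I28_ok); apply: out28_fin => //; apply: gg.
  by case: ifP => _; [apply: (piece_out _ I25_ok) | apply: (piece_out _ J25_ok)]; apply: out25_fin.
have [lb1 lb2 lb3 lb4] := lab_spec t K8 bK i3.
have [lc1 lc2 lc3 lc4] := lab_spec t K8 cK i'3.
have nl : lab K bo i != lab K co i'.
  by apply: contraNneq nf => e; rewrite -lb3 -lc3 e.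
have ie : (lab K bo i %/ 3 != lab K co i' %/ 3) = (bo != co).
  by rewrite lb2 lc2 index_eq ?sK_mem.
have b27 : lab K bo i < 27 by lia.
have c27 : lab K co i' < 27 by lia.
have b25 : lab K bo i < 25 by lia.
have c25 : lab K co i' < 25 by lia.
have i25 := @mu25_inj t N K K8.
rewrite /= mul1n /piece; case: ifP => jt.
  have i28 : {in gtn 27 &, injective (mu28 t K (gj j))} by apply: mu28_inj => //; apply: gg.
  rewrite -(lb4 (gj j)) -(lc4 (gj j)) (piece_plain I28_ok i28 b27 c27 nl).
  by rewrite /pl28 ie (_ : (j == t) = false) ?orbF //; apply/negbTE; rewrite neq_ltn jt.
case: ifP => jt2.
  by rewrite -lb3 -lc3 (piece_plain I25_ok i25 b25 c25 nl) orbT.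
rewrite -lb3 -lc3 (piece_plain J25_ok i25 b25 c25 nl).
by rewrite /plJ25 lb1 lc1 ie orbF.
Qed.

Lemma piece_0F t N gj j (K : {set 'I_N}) (co : 'I_N) i' :
  #|K| = 8 -> (j < t -> good_g t (gj j)) -> i' < 3 ->
  cnt (blocksI (piece t gj j K)) 0 (fin t co i') = ((co \in K) && (j == t)).
Proof.
move=> K8 gg i'3; rewrite /piece; case: ifP => jt.
  rewrite (piece_out _ I28_ok); last by apply: out28_0; apply: gg.
  by rewrite (_ : (j == t) = false) ?andbF //; apply/negbTE; rewrite neq_ltn jt.
have i25 := @mu25_inj t N K K8.
have [cK|cK] := boolP (co \in K); last first.
  by rewrite cntC; case: ifP => _; [apply: (piece_out _ I25_ok) | apply: (piece_out _ J25_ok)]; apply: out25_fin.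
have [lc1 lc2 lc3 lc4] := lab_spec t K8 cK i'3.
have m24 : mu25 t K 24 = 0 by [].
have nl : 24 != lab K co i' by rewrite neq_ltn lc1 orbT.
have c25 : lab K co i' < 25 by lia.
case: ifP => jt2.
  by rewrite -m24 -lc3 (piece_plain I25_ok i25 _ c25 nl).
by rewrite -m24 -lc3 (piece_plain J25_ok i25 _ c25 nl).
Qed.

Lemma piece_DF t N gj j (K : {set 'I_N}) (co : 'I_N) x i' :
  #|K| = 8 -> (j < t -> good_g t (gj j)) -> i' < 3 -> 0 < x < 3 * t + 1 ->
  cnt (blocksI (piece t gj j K)) x (fin t co i') = [&& j < t, x \in gj j & co \in K].
Proof.
move=> K8 gg i'3 xr; rewrite /piece; case: ifP => jt; last first.
  by case: ifP => _; [apply: (piece_out _ I25_ok) | apply: (piece_out _ J25_ok)]; apply: out25_D.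
have gj' := gg jt.
have [xg|xg] := boolP (x \in gj j); last first.
  by rewrite (piece_out _ I28_ok) // out28_D //; case/andP: xr.
have [cK|cK] := boolP (co \in K); last first.
  by rewrite cntC (piece_out _ I28_ok) // out28_fin.
have [lc1 lc2 lc3 lc4] := lab_spec t K8 cK i'3.
have [x27 xe] := in28_D K gj' xg.
have i28 := mu28_inj K8 gj'.
have c27 : lab K co i' < 27 by lia.
have nl : 24 + index x (gj j) != lab K co i' by rewrite neq_ltn; apply/orP; right; lia.
rewrite -{1}xe -(lc4 (gj j)) (piece_plain I28_ok i28 x27 c27 nl) /pl28.
by rewrite lc2; apply/eqP; rewrite eqb1 neq_ltn; apply/orP; right; lia.
Qed.

Lemma piece_DD t N gj j (K : {set 'I_N}) x y :
  #|K| = 8 -> (j < t -> good_g t (gj j)) -> x < 3 * t + 1 -> y < 3 * t + 1 -> x != y ->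
  cnt (blocksI (piece t gj j K)) x y = 0.
Proof.
move=> K8 gg xr yr nxy; rewrite /piece; case: ifP => jt; last first.
  have [x0|xn0] := eqVneq x 0.
    have yn0 : 0 < y by move: nxy; rewrite x0; lia.
    by rewrite cntC; case: ifP => _; [apply: (piece_out _ I25_ok) | apply: (piece_out _ J25_ok)];
      apply: out25_D; rewrite yn0 yr.
  have xp : 0 < x by lia.
  by case: ifP => _; [apply: (piece_out _ I25_ok) | apply: (piece_out _ J25_ok)];
    apply: out25_D; rewrite xp xr.
have gj' := gg jt.
have [xg|xg] := boolP (x \in gj j); last by rewrite (piece_out _ I28_ok) // out28_D.
have [yg|yg] := boolP (y \in gj j); last by rewrite cntC (piece_out _ I28_ok) // out28_D.
have [x27 xe] := in28_D K gj' xg.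
have [y27 ye] := in28_D K gj' yg.
have i28 := mu28_inj K8 gj'.
have nl : 24 + index x (gj j) != 24 + index y (gj j).
  by rewrite eqn_add2l index_eq.
rewrite -{1}xe -ye (piece_plain I28_ok i28 x27 y27 nl) /pl28.
by apply/eqP; rewrite eqb0 negbK; apply/eqP; lia.
Qed.


Lemma count_flat (T : eqType) (a : pred T) (ss : seq (seq T)) :
  count a (flatten ss) = \sum_(s <- ss) count a s.
Proof. by elim: ss => [|s ss IH]; rewrite ?big_nil ?big_cons //= count_cat IH. Qed.

Lemma cnt_decomp (U : Type) (g : seq nat * nat -> seq nat) A n (Q : nat -> seq U) h x y :
  cnt (map g (A ++ flatten [seq flatten [seq h j K | K <- Q j] | j <- iota 0 n])) x y =
  cnt (map g A) x y + \sum_(j < n) \sum_(K <- Q j) cnt (map g (h j K)) x y.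
Proof.
rewrite /cnt map_cat count_cat map_flatten count_flat big_map; congr (_ + _).
have -> : iota 0 n = index_iota 0 n by rewrite /index_iota subn0.
rewrite big_map big_mkord; apply: eq_bigr => j _.
by rewrite map_flatten count_flat big_map big_map.
Qed.

Definition DTp t (BT : seq {set 'I_(3*t+1)}) (fT : seq 'I_(3*t+1)) :=
  [seq (map val (enum (p.1 : {set 'I_(3*t+1)})), nat_of_ord p.2) | p <- zip BT fT].

Lemma memv n (A : {set 'I_n}) (o : 'I_n) : (val o \in map val (enum A)) = (o \in A).
Proof. by rewrite mem_map ?mem_enum //; apply: val_inj. Qed.

Lemma memv_out n (A : {set 'I_n}) z : n <= z -> z \notin map val (enum A).
Proof. by move=> nz; apply/mapP => [[o _ e]]; move: (ltn_ord o); rewrite -e; lia. Qed.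

Lemma DT_blocks t (BT : seq {set 'I_(3*t+1)}) (fT : seq 'I_(3*t+1)) : size fT = size BT ->
  blocksI (DTp BT fT) = [seq map val (enum A) | A : {set 'I_(3*t+1)} <- BT].
Proof.
move=> s; rewrite /blocksI /DTp -map_comp.
by rewrite -{2}(@unzip1_zip _ _ BT fT) ?s // /unzip1 -map_comp.
Qed.

Lemma DT_plain t (BT : seq {set 'I_(3*t+1)}) (fT : seq 'I_(3*t+1)) (xo yo : 'I_(3*t+1)) : size fT = size BT -> BIBD (3*t+1) 4 1 BT ->
  xo != yo -> cnt (blocksI (DTp BT fT)) xo yo = 1.
Proof.
move=> s [_ H] nxy; rewrite DT_blocks // /cnt count_map.
rewrite -[RHS](H _ _ nxy); by apply: eq_count => A /=; rewrite !memv.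
Qed.

Lemma DT_out t (BT : seq {set 'I_(3*t+1)}) (fT : seq 'I_(3*t+1)) x y : 3 * t + 1 <= x -> cnt (blocksI (DTp BT fT)) x y = 0.
Proof.
move=> xr; rewrite /cnt; apply/eqP; rewrite -leqn0 leqNgt -has_count; apply/hasP => [[A]].
by move=> /mapP [p /mapP [q _ ->] ->] /andP [/= H _]; move: H; apply/negP; exact: memv_out.
Qed.

Lemma DT_aug_out t (BT : seq {set 'I_(3*t+1)}) (fT : seq 'I_(3*t+1)) x y : 3 * t + 1 <= x -> cnt (augI (DTp BT fT)) x y = 0.
Proof.
move=> xr; rewrite /cnt; apply/eqP; rewrite -leqn0 leqNgt -has_count; apply/hasP => [[A]].
move=> /mapP [p /mapP [q _ ->] ->] /andP [/= H _]; move: H; rewrite inE; apply/negP/norP; split.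
  by apply/eqP => e; move: (ltn_ord q.2); rewrite -e; lia.
exact: memv_out.
Qed.

Lemma DT_aug t (BT : seq {set 'I_(3*t+1)}) (fT : seq 'I_(3*t+1)) x y : size fT = size BT -> BIBD (3*t+1) 4 1 BT ->
  partial_BIBD (3*t+1) 5 2 [seq p.2 |: p.1 | p <- zip BT fT] -> x != y ->
  cnt (augI (DTp BT fT)) x y <= 2 * cnt (blocksI (DTp BT fT)) x y.
Proof.
move=> s HB [_ H] nxy.
have [xr|xr] := ltnP x (3 * t + 1); last by rewrite DT_aug_out.
have [yr|yr] := ltnP y (3 * t + 1); last by rewrite cntC DT_aug_out.
pose xo := Ordinal xr; pose yo := Ordinal yr.
have nxy' : xo != yo by [].
rewrite -[x]/(val xo) -[y]/(val yo) DT_plain // muln1.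
apply: (leq_trans _ (H _ _ nxy')); rewrite leq_eqVlt; apply/orP; left; apply/eqP.
rewrite /cnt /augI /DTp -map_comp count_map count_map; apply: eq_count => p /=.
by rewrite !inE -(memv p.1 xo) -(memv p.1 yo).
Qed.


Definition Lall t N (P : seq (seq {set 'I_N})) (BT : seq {set 'I_(3*t+1)})
  (fT : seq 'I_(3*t+1)) (gj : nat -> seq nat) :=
  DTp BT fT ++ flatten [seq flatten [seq piece t gj j K | K <- nth [::] P j] | j <- iota 0 (size P)].

Lemma decode t N y : 3 * t + 1 <= y -> y < 3 * t + 1 + 3 * N ->
  exists (co : 'I_N) i, i < 3 /\ y = fin t co i.
Proof.
move=> y1 y2; have h : (y - (3 * t + 1)) %/ 3 < N by lia.
exists (Ordinal h), ((y - (3 * t + 1)) %% 3); split; first by rewrite ltn_mod.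
rewrite /fin /=; lia.
Qed.

Lemma sum_andb (U : Type) (s : seq U) (a : bool) (F : U -> bool) :
  \sum_(K <- s) ((a && F K) : nat) = a * \sum_(K <- s) (F K : nat).
Proof. rewrite big_distrr; apply: eq_bigr => K _. by rewrite -mulnb. Qed.

Lemma sum_eqt n t : t < n -> \sum_(j < n) ((nat_of_ord j == t) : nat) = 1.
Proof.
move=> tn; rewrite (bigD1 (Ordinal tn)) //= eqxx big1 // => j /negbTE.
by rewrite -(inj_eq val_inj) /= => ->.
Qed.

Lemma sum_ltt n t (F : nat -> nat) : t <= n ->
  \sum_(j < n) ((j < t) * F j) = \sum_(j < t) F j.
Proof.
move=> tn; rewrite (big_ord_widen n F tn) [RHS]big_mkcond /=; apply: eq_bigr => j _.
by case: (j < t); rewrite ?mul1n ?mul0n.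
Qed.



Lemma Lall_plain t N (P : seq (seq {set 'I_N})) B0 BT fT gj :
  BIBD N 8 1 B0 -> perm_eq (flatten P) B0 -> (forall c, c \in P -> parallel_class N c) ->
  t < size P -> BIBD (3*t+1) 4 1 BT -> size fT = size BT ->
  (forall j, j < t -> good_g t (gj j)) ->
  (forall x, 0 < x < 3*t+1 -> \sum_(j < t) ((x \in gj j) : nat) = 1) ->
  forall x y, x < 3*t+1+3*N -> y < 3*t+1+3*N -> x != y ->
  cnt (blocksI (Lall P BT fT gj)) x y = 1.
Proof.
move=> [H1 H2] pP cP tP HT sT gg gs.
have K8 : forall j K, K \in nth [::] P j -> #|K| = 8.
  move=> j K KP; apply: H1; rewrite -(perm_mem pP).
  have [jP|jP] := ltnP j (size P); last by move: KP; rewrite nth_default.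
  by apply/flattenP; exists (nth [::] P j) => //; apply: mem_nth.
have gg' : forall j, j < t -> good_g t (gj j) := gg.
have pc : forall (j : 'I_(size P)) (bo : 'I_N), \sum_(K <- nth [::] P j) ((bo \in K) : nat) = 1.
  move=> j bo; rewrite -count_sum; apply: cP; exact: mem_nth.
have fl : forall F : {set 'I_N} -> nat,
    \sum_(j < size P) \sum_(K <- nth [::] P j) F K = \sum_(K <- flatten P) F K.
  move=> F; rewrite big_flatten /= (big_nth [::]) big_mkord //.
have caseB : forall x y, x < 3*t+1 -> 3*t+1 <= y -> y < 3*t+1+3*N ->
    cnt (blocksI (Lall P BT fT gj)) x y = 1.
  move=> x y xr yr1 yr2; have [co [i' [i'3 ->]]] := decode yr1 yr2.
  rewrite /Lall /blocksI cnt_decomp cntC.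
  rewrite (DT_out BT fT) ?add0n; last by rewrite /fin; lia.
  have [x0|xp] := posnP x.
    subst x.
    under eq_bigr => j _ do (under eq_big_seq => K KP do
      rewrite -/(blocksI _) (piece_0F co (K8 _ _ KP) (gg' j) i'3) andbC).
    under eq_bigr => j _ do rewrite sum_andb pc muln1.
    exact: sum_eqt.
  under eq_bigr => j _ do (under eq_big_seq => K KP do
    rewrite -/(blocksI _) (piece_DF co (K8 _ _ KP) (gg' j) i'3 (_ : 0 < x < 3*t+1)) ?xp ?xr // andbA).
  under eq_bigr => j _ do rewrite sum_andb pc muln1 -mulnb.
  rewrite (sum_ltt (fun j => (x \in gj j) : nat) (ltnW tP)); apply: gs; rewrite xp xr.
  done.
move=> x y xr yr nxy.
have [xr'|xr'] := ltnP x (3*t+1); have [yr'|yr'] := ltnP y (3*t+1).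
- rewrite /Lall /blocksI cnt_decomp.
  have nxy' : Ordinal xr' != Ordinal yr' by [].
  have E := DT_plain sT HT nxy'; rewrite /= in E; rewrite E big1 ?addn0 // => j _.
  rewrite big1_seq // => K /andP [_ KP].
  exact: (piece_DD (K8 _ _ KP) (gg' j) xr' yr' nxy).
- exact: caseB.
- by rewrite cntC; apply: caseB; rewrite // eq_sym.
have [bo [i [i3 ex]]] := decode xr' xr.
have [co [i' [i'3 ey]]] := decode yr' yr.
have nf : fin t bo i != fin t co i' by rewrite -ex -ey.
rewrite /Lall /blocksI cnt_decomp (DT_out BT fT) ?add0n //.
rewrite ex ey.
under eq_bigr => j _ do (under eq_big_seq => K KP do
  rewrite -/(blocksI _) (piece_FF (K8 _ _ KP) (gg' j) i3 i'3 nf)).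
have [ebc|nbc] := eqVneq bo co.
  subst co.
  under eq_bigr => j _ do (under eq_bigr => K _ do rewrite andbb orFb mulnb andbC).
  under eq_bigr => j _ do rewrite sum_andb pc muln1.
  exact: sum_eqt.
under eq_bigr => j _ do (under eq_bigr => K _ do rewrite orTb muln1).
rewrite fl -count_sum; move/permP: pP => ->; exact: H2.
Qed.


Lemma Lall_aug t N (P : seq (seq {set 'I_N})) B0 BT fT gj :
  BIBD N 8 1 B0 -> perm_eq (flatten P) B0 ->
  BIBD (3*t+1) 4 1 BT -> size fT = size BT ->
  partial_BIBD (3*t+1) 5 2 [seq p.2 |: p.1 | p <- zip BT fT] ->
  (forall j, j < t -> good_g t (gj j)) ->
  forall x y, x != y ->
  cnt (augI (Lall P BT fT gj)) x y <= 2 * cnt (blocksI (Lall P BT fT gj)) x y.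
Proof.
move=> [H1 H2] pP HT sT pT gg x y nxy.
have K8 : forall j K, K \in nth [::] P j -> #|K| = 8.
  move=> j K KP; apply: H1; rewrite -(perm_mem pP).
  have [jP|jP] := ltnP j (size P); last by move: KP; rewrite nth_default.
  by apply/flattenP; exists (nth [::] P j) => //; apply: mem_nth.
rewrite /Lall /augI /blocksI !cnt_decomp mulnDr leq_add //.
  exact: (DT_aug sT HT pT nxy).
rewrite big_distrr /=; apply: leq_sum => j _.
rewrite big_distrr /=; rewrite big_seq_cond [X in _ <= X]big_seq_cond.
apply: leq_sum => K /andP [KP _].
exact: (piece_aug_le (K8 _ _ KP) (gg j) nxy).
Qed.

Lemma mapI_block n I pl mu p vv : tab_ok n I pl -> {in gtn n &, injective mu} ->
  (forall l, l < n -> mu l < vv) -> p \in mapI mu I ->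
  [/\ uniq (p.2 :: p.1), size p.1 = 4 & all (gtn vv) (p.2 :: p.1)].
Proof.
move=> T inj bd /mapP [q qI ->]; have [u s /allP a] := (tab_ok_use T).2 q qI.
split.
- rewrite (_ : _ :: _ = map mu (q.2 :: q.1)) // map_inj_in_uniq //.
  by move=> l l' /a ln /a l'n; apply: inj.
- by rewrite size_map.
- apply/allP => z; rewrite (_ : _ :: _ = map mu (q.2 :: q.1)) // => /mapP [l lq ->].
  by apply: bd; apply: a.
Qed.

Lemma sK_lt N (K : {set 'I_N}) z : z \in sK K -> z < N.
Proof. by move=> /mapP [o _ ->]; apply: ltn_ord. Qed.

Lemma mu25_lt t N (K : {set 'I_N}) l : #|K| = 8 -> mu25 t K l < 3 * t + 1 + 3 * N.
Proof.
move=> K8; rewrite /mu25; case: ifP => l24; last lia.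
have := sK_lt (nth_sK K8 l24); have := ltn_mod l 3; rewrite /fin; lia.
Qed.

Lemma mu28_lt t N (K : {set 'I_N}) g l : #|K| = 8 -> good_g t g -> l < 27 ->
  mu28 t K g l < 3 * t + 1 + 3 * N.
Proof.
move=> K8 [g3 gu gr] l27; rewrite /mu28; case: ifP => l24.
  have := sK_lt (nth_sK K8 l24); have := ltn_mod l 3; rewrite /fin; lia.
have := gr (nth 0 g (l - 24)); rewrite mem_nth ?g3; last lia.
by move=> /(_ isT); lia.
Qed.

Lemma mem_zip1 (S T : eqType) (s : seq S) (u : seq T) x y : (x, y) \in zip s u -> x \in s.
Proof.
elim: s u => [|a s IH] [|b u] //=; rewrite inE => /orP [/eqP [-> _]|/IH].
  by rewrite eqxx.
by move=> xs; rewrite xs orbT.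
Qed.

Lemma Lall_blocks t N (P : seq (seq {set 'I_N})) B0 (BT : seq {set 'I_(3*t+1)}) fT gj :
  BIBD N 8 1 B0 -> perm_eq (flatten P) B0 ->
  BIBD (3*t+1) 4 1 BT ->
  (forall p, p \in zip BT fT -> p.2 \notin p.1) ->
  (forall j, j < t -> good_g t (gj j)) ->
  forall p, p \in Lall P BT fT gj ->
  [/\ uniq (p.2 :: p.1), size p.1 = 4 & all (gtn (3 * t + 1 + 3 * N)) (p.2 :: p.1)].
Proof.
move=> [H1 H2] pP [HT1 _] nT gg.
have K8 : forall j K, K \in nth [::] P j -> #|K| = 8.
  move=> j K KP; apply: H1; rewrite -(perm_mem pP).
  have [jP|jP] := ltnP j (size P); last by move: KP; rewrite nth_default.
  by apply/flattenP; exists (nth [::] P j) => //; apply: mem_nth.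
move=> p; rewrite mem_cat => /orP [|].
  move=> /mapP [[A o] Ao ->] /=; have AB := mem_zip1 Ao.
  have := nT _ Ao => /= oA.
  split.
  - rewrite map_inj_uniq ?enum_uniq; last by apply: val_inj.
    by rewrite andbT -[nat_of_ord o]/(val o) memv oA.
  - by rewrite size_map -cardE HT1.
  - rewrite /=; apply/andP; split; first exact: (leq_trans (ltn_ord o) (leq_addr _ _)).
    by apply/allP => z /mapP [o' _ ->]; exact: (leq_trans (ltn_ord o') (leq_addr _ _)).
move=> /flattenP [s /mapP [j _ ->] /flattenP [s' /mapP [K KP ->]]].
have k8 := K8 _ _ KP.
rewrite /piece; case: ifP => jt.
  apply: (mapI_block I28_ok (mu28_inj k8 (gg j jt))).
  by move=> l l27; apply: mu28_lt => //; apply: gg.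
case: ifP => _.
  by apply: (mapI_block I25_ok (@mu25_inj t N K k8)) => l _; apply: mu25_lt.
by apply: (mapI_block J25_ok (@mu25_inj t N K k8)) => l _; apply: mu25_lt.
Qed.


Definition toset V (s : seq nat) : {set 'I_V} := [set z : 'I_V | val z \in s].

Lemma card_toset V (s : seq nat) : uniq s -> all (gtn V) s -> #|toset V s| = size s.
Proof.
move=> us /allP as_.
have P : perm_eq (map val (enum (toset V s))) s.
  apply: uniq_perm => //; first by rewrite map_inj_uniq ?enum_uniq //; apply: val_inj.
  move=> z; apply/mapP/idP => [[o]|zs]; first by rewrite mem_enum inE => ? ->.
  have zV : z < V by apply: as_.
  by exists (Ordinal zV) => //; rewrite mem_enum inE.
by rewrite cardE -(size_map val) (perm_size P).
Qed.

Lemma in_toset V (s : seq nat) (z : 'I_V) : (z \in toset V s) = (val z \in s).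
Proof. by rewrite inE. Qed.

Definition Bp0 t (BT : seq {set 'I_(3*t+1)}) (p0 : 'I_(3*t+1)) := [seq A <- BT | p0 \in (A : {set 'I_(3*t+1)})].
Definition gjT t (BT : seq {set 'I_(3*t+1)}) (p0 : 'I_(3*t+1)) (j : nat) : seq nat :=
  map val (enum (nth set0 (Bp0 BT p0) j :\ p0)).

Lemma Bp0_size t (BT : seq {set 'I_(3*t+1)}) p0 : BIBD (3*t+1) 4 1 BT -> size (Bp0 BT p0) = t.
Proof.
move=> HB; have := degree p0 HB; rewrite /Bp0 size_filter /=.
rewrite (_ : (3 * t + 1).-1 = 3 * t); last by lia.
move=> e; lia.
Qed.

Lemma gjT_good t (BT : seq {set 'I_(3*t+1)}) p0 j : val p0 = 0 -> BIBD (3*t+1) 4 1 BT -> j < t ->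
  good_g t (gjT BT p0 j).
Proof.
move=> v0 HB jt; have := Bp0_size p0 HB => sz.
have : nth set0 (Bp0 BT p0) j \in Bp0 BT p0 by rewrite mem_nth // sz.
rewrite mem_filter => /andP [pA AB]; case: HB => H1 _.
split.
- rewrite size_map -cardE; have := cardsD1 p0 (nth set0 (Bp0 BT p0) j).
  by rewrite pA H1 // add1n => e; apply/eqP; rewrite -eqSS -e.
- by rewrite map_inj_uniq ?enum_uniq //; apply: val_inj.
- move=> z /mapP [o]; rewrite mem_enum !inE => /andP [op _] ->.
  apply/andP; split; last exact: ltn_ord.
  by rewrite lt0n; apply: contra op => /eqP e; apply/eqP/val_inj; rewrite /= e v0.
Qed.

Lemma gjT_sum t (BT : seq {set 'I_(3*t+1)}) p0 x : val p0 = 0 -> BIBD (3*t+1) 4 1 BT ->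
  0 < x < 3*t+1 -> \sum_(j < t) ((x \in gjT BT p0 j) : nat) = 1.
Proof.
move=> v0 HB /andP [x0 xr]; have := Bp0_size p0 HB => sz.
pose xo := Ordinal xr.
have nx : p0 != xo by apply/eqP => e; move: x0; rewrite -[x]/(val xo) -e v0.
transitivity (\sum_(j < t) ((xo \in nth set0 (Bp0 BT p0) j) : nat)).
  apply: eq_bigr => j _; rewrite /gjT -[x]/(val xo) (memv _ xo) !inE.
  by rewrite eq_sym nx.
transitivity (\sum_(A <- Bp0 BT p0) ((xo \in A) : nat)).
  by rewrite [RHS](big_nth set0) sz big_mkord.
rewrite -count_sum /Bp0 count_filter.
case: HB => _ H2; rewrite -[RHS](H2 _ _ nx); apply: eq_count => A /=.
by rewrite andbC.
Qed.


Lemma sizeP m (P : seq (seq {set 'I_(56 * m + 8)})) B0 :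
  BIBD (56 * m + 8) 8 1 B0 -> perm_eq (flatten P) B0 ->
  (forall c, c \in P -> parallel_class (56 * m + 8) c) -> size P = 8 * m + 1.
Proof.
move=> HB pP cP.
have h0 : 0 < 56 * m + 8 by lia.
have := degree (Ordinal h0) HB; move/permP: pP => <-.
rewrite count_flat (eq_big_seq (fun _ => 1)) ?sum1_size; last by move=> c /cP; apply.
rewrite -!subn1 (_ : 8 - 1 = 7) // => e.
have H : forall n, n * 7 = 56 * m + 8 - 1 -> n = 8 * m + 1 by move=> n; lia.
exact: H e.
Qed.

Unset Implicit Arguments.

Theorem mainTheorem12 (m t : nat) :
  (exists B : seq {set 'I_(56 * m + 8)}, resolvable_BIBD (56 * m + 8) 8 1 B) ->
  t <= 8 * m ->
  (exists B : seq {set 'I_(3 * t + 1)}, nested_BIBD (3 * t + 1) B) ->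
  exists B : seq {set 'I_(168 * m + 3 * t + 25)}, nested_BIBD (168 * m + 3 * t + 25) B.
Proof.
move=> [B0 [HB [P [pP cP]]]] tm [BT [HT [fT [sT [nT pT]]]]].
have szP := sizeP HB pP cP.
have tP : t < size P by lia.
have h0 : 0 < 3 * t + 1 by lia.
pose p0 := Ordinal h0.
pose gj := gjT BT p0.
have gg : forall j, j < t -> good_g t (gj j) by move=> j jt; apply: gjT_good.
have gs : forall x, 0 < x < 3*t+1 -> \sum_(j < t) ((x \in gj j) : nat) = 1.
  by move=> x xr; apply: gjT_sum.
pose L := Lall P BT fT gj.
have ev : 3 * t + 1 + 3 * (56 * m + 8) = 168 * m + 3 * t + 25 by lia.
have Hpl := Lall_plain HB pP cP tP HT sT gg gs.
have Hag := Lall_aug HB pP HT sT pT gg.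
have Hbl := Lall_blocks HB pP HT nT gg.
rewrite ev in Hpl Hbl.
set V := 168 * m + 3 * t + 25 in Hpl Hbl *.
have V0 : 0 < V by rewrite /V; lia.
pose o0 := Ordinal V0.
exists [seq toset V p.1 | p <- L].
have Hv : forall p, p \in L -> forall z, z \in p.2 :: p.1 -> z < V.
  by move=> p pL z zp; have [_ _ /allP a] := Hbl p pL; apply: a.
split.
  split.
    move=> A /mapP [p pL ->]; have [u s _] := Hbl p pL.
    rewrite card_toset ?s //; first by case/andP: u.
    by apply/allP => z zp; apply: (Hv p pL); rewrite inE zp orbT.
  move=> x y nxy; rewrite count_map.
  have nxy' : val x != val y by [].
  rewrite -(Hpl (val x) (val y) (ltn_ord x) (ltn_ord y) nxy') /cnt /blocksI count_map.
  by apply: eq_count => p /=; rewrite !in_toset.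
exists [seq insubd o0 p.2 | p <- L].
rewrite zip_map; split; first by rewrite !size_map.
have ins : forall p, p \in L -> val (insubd o0 p.2) = p.2.
  by move=> p pL; rewrite val_insubd (Hv p pL) // inE eqxx.
split.
  move=> q /mapP [p pL ->] /=; rewrite in_toset ins //.
  by have [/andP [] ] := Hbl p pL.
split.
  move=> A /mapP [q /mapP [p pL ->] ->] /=.
  have -> : insubd o0 p.2 |: toset V p.1 = toset V (p.2 :: p.1).
    by apply/setP => z; rewrite !inE -(inj_eq val_inj) ins.
  have [u s a] := Hbl p pL.
  by rewrite card_toset //= s.
move=> x y nxy; rewrite -map_comp count_map.
have nxy' : val x != val y by [].
have := Hag _ _ nxy'; rewrite (Hpl _ _ (ltn_ord x) (ltn_ord y) nxy') muln1.
apply: leq_trans; rewrite leq_eqVlt; apply/orP; left; apply/eqP.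
rewrite /cnt /augI count_map; apply: eq_in_count => p pL /=.
by rewrite !inE -!(inj_eq val_inj) !ins.
Qed.
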